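(* Let $T$ be an expanding Markov map with a finite partition, $x\in[0,1]$ and $\kappa>0$. Then $\{y\in[0,1]:\overline R(x,y)>1/\kappa\}\subset\mathcal B^\kappa(x)\subset\{y\in[0,1]:\overline R(x,y)\ge1/\kappa\}$ and $\{y\in[0,1]:\overline R(x,y)<1/\kappa\}\subset\mathcal U^\kappa(x)\subset\{y\in[0,1]:\overline R(x,y)\le1/\kappa\}$.
   Context: An expanding Markov map with a finite partition is a map $T:[0,1]\to[0,1]$ for which there are points $0=a_0<\dots<a_Q=1$, with $I(i)=(a_i,a_{i+1})$, such that: (1) there are $n_0\in\mathbb N$, $\rho>1$ with $|(T^{n_0})'|\ge\rho$; (2) $T$ is strictly monotonic on each $I(i)$ and extends to a $C^2$ function on each $\overline{I(i)}$; (3) if $I(j)\cap T(I(k))\ne\emptyset$ then $I(j)\subset T(I(k))$; (4) there is $R$ with $I(j)\subset\bigcup_{n=1}^RT^n(I(k))$ for all $j,k$; (5) for every $k$, $\sup_{(x,y,z)\in I(k)^3}|T''(x)|/(|T'(y)||T'(z)|)<\infty$. $B(z,r)$ is the open ball. $\mathcal U^\kappa(x)=\bigcup_{i\ge1}\bigcap_{N\ge i}\bigcup_{n=1}^NB(T^nx,N^{-\kappa})$, $\mathcal B^\kappa(x)=[0,1]\setminus\mathcal U^\kappa(x)$. Hitting time: $\tau_r(x,y)=\inf\{n\ge1:T^nx\in B(y,r)\}$, and $\overline R(x,y)=\limsup_{r\to0}\frac{\log\tau_r(x,y)}{-\log r}$, with the convention that if $\{T^nx:n\ge1\}\cap B(y,r)=\emptyset$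 for some $r>0$ then $\tau_r(x,y)=\infty$ and $\overline R(x,y)=\infty$. *)

(* Defs.v *)
From Stdlib Require Import Reals Lra.
From Stdlib Require Import ClassicalDescription.
From Coquelicot Require Import Coquelicot.
Open Scope R_scope.

Definition iterT (T : R -> R) (n : nat) (t : R) : R := Nat.iter n T t.

Definition Iint (a : nat -> R) (i : nat) (t : R) : Prop := a i < t < a (S i).

(* g is C^2 on R (equivalent to having a C^2 extension on a closed interval) *)
Definition C2 (g : R -> R) : Prop :=
  (forall t, ex_derive g t) /\ (forall t, ex_derive (Derive g) t) /\
  (forall t, continuous (Derive_n g 2) t).

Definition strictly_monotone_on (P : R -> Prop) (f : R -> R) : Prop :=
  (forall s t, P s -> P t -> s < t -> f s < f t) \/
  (forall s t, P s -> P t -> s < t -> f t < f s).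

Definition expanding_markov (T : R -> R) : Prop :=
  (forall t, 0 <= t <= 1 -> 0 <= T t <= 1) /\
  exists (Q : nat) (a : nat -> R),
    (1 <= Q)%nat /\ a 0%nat = 0 /\ a Q = 1 /\
    (forall i, (i < Q)%nat -> a i < a (S i)) /\
    (* (1) expansion: |(T^n0)'| >= rho wherever T^n0 is defined (orbit in the open intervals) *)
    (exists (n0 : nat) (rho : R), 1 < rho /\
       forall t, 0 <= t <= 1 ->
         (forall k, (k < n0)%nat -> exists i, (i < Q)%nat /\ Iint a i (iterT T k t)) ->
         rho <= Rabs (Derive (fun s => iterT T n0 s) t)) /\
    (forall i, (i < Q)%nat ->
       strictly_monotone_on (Iint a i) T /\
       exists g : R -> R, C2 g /\ forall t, Iint a i t -> g t = T t) /\
    (forall j k, (j < Q)%nat -> (k < Q)%nat ->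
       (exists s, Iint a k s /\ Iint a j (T s)) ->
       forall t, Iint a j t -> exists s, Iint a k s /\ T s = t) /\
    (exists Rn : nat, forall j k, (j < Q)%nat -> (k < Q)%nat ->
       forall t, Iint a j t ->
         exists (n : nat) (s : R), (1 <= n <= Rn)%nat /\ Iint a k s /\ iterT T n s = t) /\
    (forall k, (k < Q)%nat -> exists M : R,
       forall u v w, Iint a k u -> Iint a k v -> Iint a k w ->
         Rabs (Derive_n T 2 u) <= M * Rabs (Derive T v) * Rabs (Derive T w)).

Definition inB (z r y : R) : Prop := Rabs (y - z) < r.

Definition Uk (T : R -> R) (kappa x y : R) : Prop :=
  0 <= y <= 1 /\
  exists i : nat, (1 <= i)%nat /\
    forall N : nat, (i <= N)%nat ->
      exists n : nat, (1 <= n <= N)%nat /\ inB (iterT T n x) (Rpower (INR N) (- kappa)) y.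

Definition Bk (T : R -> R) (kappa x y : R) : Prop :=
  0 <= y <= 1 /\ ~ Uk T kappa x y.

(* hitting time tau_r(x,y) in Rbar (p_infty if never hit) *)
Definition hits (T : R -> R) (x y r : R) (n : nat) : Prop :=
  (1 <= n)%nat /\ inB y r (iterT T n x).

Definition tau (T : R -> R) (x y r : R) : Rbar :=
  Rbar_glb (fun v => exists n, hits T x y r n /\ v = Finite (INR n)).

Definition ratio (T : R -> R) (x y r : R) : Rbar :=
  match tau T x y r with
  | Finite t => Finite (ln t / (- ln r))
  | _ => p_infty
  end.

Definition limsup_0 (f : R -> Rbar) : Rbar :=
  Rbar_glb (fun v => exists delta, 0 < delta /\
     v = Rbar_lub (fun w => exists r, 0 < r < delta /\ w = f r)).

Definition Rbar_up (T : R -> R) (x y : R) : Rbar :=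
  if excluded_middle_informative (exists r, 0 < r /\ forall n, ~ hits T x y r n)
  then p_infty
  else limsup_0 (ratio T x y).

(* Main.v *)
Require Import Defs.
From Stdlib Require Import Reals.
From Coquelicot Require Import Coquelicot.
From Stdlib Require Import Lra Lia Classical ZArith ClassicalDescription.
Open Scope R_scope.

Lemma glb_c (E : Rbar -> Prop) : Rbar_is_glb E (Rbar_glb E).
Proof. unfold Rbar_glb; destruct (Rbar_ex_glb E); auto. Qed.
Lemma lub_c (E : Rbar -> Prop) : Rbar_is_lub E (Rbar_lub E).
Proof. unfold Rbar_lub; destruct (Rbar_ex_lub E); auto. Qed.

Lemma exp_le' a b : a <= b -> exp a <= exp b.
Proof. intros H; destruct (Rle_lt_or_eq_dec _ _ H) as [H'|H'].
  left; apply exp_increasing; auto. subst; lra. Qed.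

Lemma nat_between A : 0 <= A -> exists N, A < INR N <= A + 1.
Proof.
  intros HA. destruct (archimed A) as [H1 H2]. exists (Z.to_nat (up A)).
  rewrite INR_IZR_INZ, Z2Nat.id. lra. apply le_IZR; simpl; lra.
Qed.

Lemma tau_fin T x y r n : hits T x y r n ->
  exists t, tau T x y r = Finite t /\ 1 <= t <= INR n.
Proof.
  intros H. unfold tau.
  destruct (glb_c (fun v => exists n, hits T x y r n /\ v = Finite (INR n))) as [Hlb Hg].
  assert (H1 := Hlb _ (ex_intro _ n (conj H eq_refl))).
  assert (H2 : Rbar_le (Finite 1) (Rbar_glb (fun v => exists n, hits T x y r n /\ v = Finite (INR n)))).
  { apply Hg. intros v [m [[Hm _] ->]]. simpl. replace 1 with (INR 1) by reflexivity.
    apply le_INR; lia. }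
  destruct (Rbar_glb _); simpl in *; try contradiction. eauto.
Qed.

Lemma tau_lt T x y r t M : tau T x y r = Finite t -> t < M ->
  exists n, hits T x y r n /\ INR n < M.
Proof.
  intros Ht HM. apply NNPP; intro Hn.
  unfold tau in Ht.
  destruct (glb_c (fun v => exists n, hits T x y r n /\ v = Finite (INR n))) as [Hlb Hg].
  assert (H2 : Rbar_le (Finite M) (Rbar_glb (fun v => exists n, hits T x y r n /\ v = Finite (INR n)))).
  { apply Hg. intros v [m [Hm ->]]. simpl. apply Rnot_lt_le. intro; apply Hn; eauto. }
  rewrite Ht in H2. simpl in H2. lra.
Qed.

Lemma UkHit T k x y : 0 < k -> Uk T k x y -> exists d, 0 < d < 1 /\
  forall r, 0 < r < d -> exists n, hits T x y r n /\ INR n <= 2 * exp (- ln r / k).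
Proof.
  intros Hk [Hy [i [Hi HU]]].
  assert (Hi1 : 1 <= INR i) by (replace 1 with (INR 1) by reflexivity; apply le_INR; lia).
  assert (lni : 0 <= ln (INR i)) by (rewrite <- ln_1; apply ln_le; lra).
  exists (Rmin (exp (- k * ln (INR i))) (1/2)).
  split. split. apply Rmin_pos. apply exp_pos. lra.
  assert (Rmin (exp (- k * ln (INR i))) (1/2) <= 1/2) by apply Rmin_r. lra.
  intros r [Hr Hrd].
  assert (Hr1 : r < exp (- k * ln (INR i))) by (eapply Rlt_le_trans; [exact Hrd| apply Rmin_l]).
  assert (Hr2 : r < 1/2) by (eapply Rlt_le_trans; [exact Hrd| apply Rmin_r]).
  assert (HL : ln r < - k * ln (INR i)).
  { rewrite <- (ln_exp (- k * ln (INR i))). apply ln_increasing; auto. }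
  assert (HL0 : ln r < 0) by (rewrite <- ln_1; apply ln_increasing; lra).
  assert (Hlk : ln (INR i) < - ln r / k).
  { apply (Rmult_lt_reg_l k); auto. replace (k * (- ln r / k)) with (- ln r) by (field; lra). lra. }
  assert (HE : INR i < exp (- ln r / k)).
  { rewrite <- (exp_ln (INR i)) by lra. apply exp_increasing; auto. }
  destruct (nat_between (exp (- ln r / k))) as [N [HN1 HN2]]. left; apply exp_pos.
  assert (HiN : (i < N)%nat) by (apply INR_lt; lra).
  destruct (HU N) as [n [Hn Hb]]. lia.
  exists n. split. split. lia. unfold inB in *. rewrite Rabs_minus_sym.
  eapply Rlt_le_trans; [exact Hb|]. unfold Rpower.
  rewrite <- (exp_ln r) by lra. apply exp_le'.
  assert (ln (exp (- ln r / k)) <= ln (INR N)) by (apply ln_le; [apply exp_pos|lra]).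
  rewrite ln_exp in H.
  assert (k * (- ln r / k) <= k * ln (INR N)) by (apply Rmult_le_compat_l; lra).
  replace (k * (- ln r / k)) with (- ln r) in H0 by (field; lra). lra.
  assert (INR n <= INR N) by (apply le_INR; lia). lra.
Qed.

Lemma glb_le_eps (E : Rbar -> Prop) c :
  (forall eps, 0 < eps -> exists v, E v /\ Rbar_le v (Finite (c + eps))) ->
  Rbar_le (Rbar_glb E) (Finite c).
Proof.
  intros H. destruct (glb_c E) as [Hlb _].
  assert (Hk : forall eps, 0 < eps -> Rbar_le (Rbar_glb E) (Finite (c + eps))).
  { intros eps He. destruct (H eps He) as [v [Hv Hle]]. eapply Rbar_le_trans; [apply Hlb; exact Hv| exact Hle]. }
  destruct (Rbar_glb E) as [g| |]; simpl in *.
  - apply Rnot_lt_le; intro Hg. specialize (Hk ((g - c)/2)). simpl in Hk. lra.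
  - specialize (Hk 1). simpl in Hk. apply Hk; lra.
  - auto.
Qed.

Lemma up_le T k x y : 0 < k -> Uk T k x y -> Rbar_le (Rbar_up T x y) (Finite (1 / k)).
Proof.
  intros Hk HU. destruct (UkHit T k x y Hk HU) as [d [Hd HH]].
  unfold Rbar_up. destruct excluded_middle_informative as [[r [Hr Hno]]|_].
  - exfalso. destruct (HH (Rmin r (d/2))) as [n [[Hn1 Hn2] _]].
    split. apply Rmin_pos; lra. assert (Rmin r (d/2) <= d/2) by apply Rmin_r. lra.
    apply (Hno n). split; auto. unfold inB in *. assert (Rmin r (d/2) <= r) by apply Rmin_l. lra.
  - unfold limsup_0. apply glb_le_eps. intros eps He.
    set (d' := Rmin d (exp (- ln 2 / eps))).
    assert (Hd' : 0 < d') by (apply Rmin_pos; [lra|apply exp_pos]).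
    eexists; split. exists d'. split. exact Hd'. reflexivity.
    destruct (lub_c (fun w => exists r, 0 < r < d' /\ w = ratio T x y r)) as [_ Hub].
    apply Hub. intros w [r [[Hr Hrd] ->]].
    assert (Hrd1 : r < d) by (eapply Rlt_le_trans; [exact Hrd| apply Rmin_l]).
    assert (Hrd2 : r < exp (- ln 2 / eps)) by (eapply Rlt_le_trans; [exact Hrd| apply Rmin_r]).
    destruct (HH r) as [n [Hn Hnb]]. lra.
    destruct (tau_fin _ _ _ _ _ Hn) as [t [Ht Htb]].
    unfold ratio. rewrite Ht. simpl.
    assert (HL0 : ln r < 0) by (rewrite <- ln_1; apply ln_increasing; lra).
    assert (Hl2 : 0 < ln 2) by (rewrite <- ln_1; apply ln_increasing; lra).
    assert (HL : ln r < - ln 2 / eps).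
    { rewrite <- (ln_exp (- ln 2 / eps)). apply ln_increasing; auto. }
    assert (HL' : ln 2 < eps * (- ln r)).
    { assert (eps * (ln r) < eps * (- ln 2 / eps)) by (apply Rmult_lt_compat_l; lra).
      replace (eps * (- ln 2 / eps)) with (- ln 2) in H by (field; lra). lra. }
    assert (Hlt : ln t <= ln 2 + - ln r / k).
    { rewrite <- (ln_exp (- ln r / k)). rewrite <- ln_mult by (lra || apply exp_pos).
      apply ln_le; lra. }
    apply (Rmult_le_reg_r (- ln r)). lra.
    replace (ln t / - ln r * - ln r) with (ln t) by (field; lra).
    rewrite Rmult_plus_distr_r.
    replace (- ln r / k) with (1 / k * - ln r) in Hlt by (field; lra). lra.
Qed.

Lemma glb_lt (E : Rbar -> Prop) c : Rbar_lt (Rbar_glb E) c -> exists v, E v /\ Rbar_lt v c.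
Proof.
  intros H. apply NNPP; intro Hn. destruct (glb_c E) as [_ Hg].
  assert (Rbar_le c (Rbar_glb E)).
  { apply Hg. intros v Hv. apply Rbar_not_lt_le. intro; apply Hn; eauto. }
  exact (Rbar_lt_not_le _ _ H H0).
Qed.

Lemma up_lt T k x y : 0 < k -> 0 <= y <= 1 ->
  Rbar_lt (Rbar_up T x y) (Finite (1 / k)) -> Uk T k x y.
Proof.
  intros Hk Hy. unfold Rbar_up. destruct excluded_middle_informative as [_|Hnot].
  simpl; tauto.
  intros Hlt.
  assert (Hall : forall r, 0 < r -> exists n, hits T x y r n).
  { intros r Hr. apply NNPP; intro H. apply Hnot. exists r. split; auto. intros n Hn; apply H; eauto. }
  unfold limsup_0 in Hlt. destruct (glb_lt _ _ Hlt) as [v [[d [Hd ->]] Hv]].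
  assert (Hc : exists c, c < 1 / k /\ forall r, 0 < r < d -> Rbar_le (ratio T x y r) (Finite c)).
  { destruct (lub_c (fun w => exists r, 0 < r < d /\ w = ratio T x y r)) as [Hub _].
    revert Hub Hv.
    destruct (Rbar_lub (fun w => exists r, 0 < r < d /\ w = ratio T x y r)) as [l| |];
      intros Hub Hv; simpl in Hv; try contradiction.
    - exists l. split; auto. intros r Hr. apply Hub. eauto.
    - exists (1/k - 1). split. lra. intros r Hr. assert (Hh := Hub _ (ex_intro _ r (conj Hr eq_refl))).
      destruct (ratio T x y r); simpl in Hh; simpl; tauto. }
  destruct Hc as [c [Hc Hcr]].
  assert (HA : 0 <= Rmax 2 (exp (- ln d / k))) by (eapply Rle_trans; [|apply Rmax_l]; lra).
  destruct (nat_between _ HA) as [i [Hi1 Hi2]].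
  assert (Hi2' : 2 < INR i) by (eapply Rle_lt_trans; [apply Rmax_l|exact Hi1]).
  assert (Hi3 : exp (- ln d / k) < INR i) by (eapply Rle_lt_trans; [apply Rmax_r|exact Hi1]).
  split; auto. exists i. split.
  { apply INR_le. simpl. lra. }
  intros N HN.
  assert (HNi : INR i <= INR N) by (apply le_INR; lia).
  set (r := Rpower (INR N) (- k)).
  assert (Hr0 : 0 < r) by apply exp_pos.
  assert (Hlr : ln r = - k * ln (INR N)) by (unfold r, Rpower; apply ln_exp).
  assert (HlN : - ln d / k < ln (INR N)).
  { rewrite <- (ln_exp (- ln d / k)). apply ln_increasing. apply exp_pos. lra. }
  assert (Hl2 : 0 < ln (INR N)) by (rewrite <- ln_1; apply ln_increasing; lra).
  assert (Hrd : r < d).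
  { rewrite <- (exp_ln d) by lra. unfold r, Rpower. apply exp_increasing.
    assert (k * (- ln d / k) < k * ln (INR N)) by (apply Rmult_lt_compat_l; lra).
    replace (k * (- ln d / k)) with (- ln d) in H by (field; lra). lra. }
  destruct (Hall r Hr0) as [n0 Hn0].
  destruct (tau_fin _ _ _ _ _ Hn0) as [t [Ht Htb]].
  assert (Hrat := Hcr r (conj Hr0 Hrd)). unfold ratio in Hrat. rewrite Ht in Hrat. simpl in Hrat.
  rewrite Hlr in Hrat.
  assert (Hpos : 0 < - (- k * ln (INR N))) by nra.
  assert (Hlt' : ln t <= c * (- (- k * ln (INR N)))).
  { apply (Rmult_le_compat_r (- (- k * ln (INR N)))) in Hrat; [|lra].
    replace (ln t / - (- k * ln (INR N)) * - (- k * ln (INR N))) with (ln t) in Hrat by (field; lra).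
    exact Hrat. }
  assert (Hck : c * k < 1).
  { apply (Rmult_lt_compat_r k) in Hc; auto. replace (1 / k * k) with 1 in Hc by (field; lra). exact Hc. }
  assert (Hlnt : ln t < ln (INR N)) by nra.
  assert (HtN : t < INR N) by (apply ln_lt_inv; lra).
  destruct (tau_lt _ _ _ _ _ _ Ht HtN) as [n [[Hn1 Hn2] HnN]].
  exists n. split. split. auto. apply INR_lt in HnN. lia.
  unfold inB in *. rewrite Rabs_minus_sym. exact Hn2.
Qed.

Theorem lemma4p2 (T : R -> R) (x kappa : R)
  (HT : expanding_markov T) (Hx : 0 <= x <= 1) (Hk : 0 < kappa) :
  ((forall y, 0 <= y <= 1 -> Rbar_lt (Finite (1 / kappa)) (Rbar_up T x y) -> Bk T kappa x y) /\
   (forall y, Bk T kappa x y -> 0 <= y <= 1 /\ Rbar_le (Finite (1 / kappa)) (Rbar_up T x y))) /\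
  ((forall y, 0 <= y <= 1 -> Rbar_lt (Rbar_up T x y) (Finite (1 / kappa)) -> Uk T kappa x y) /\
   (forall y, Uk T kappa x y -> 0 <= y <= 1 /\ Rbar_le (Rbar_up T x y) (Finite (1 / kappa)))).
Proof.
  split; split.
  - intros y Hy Hlt. split; auto. intro HU.
    exact (Rbar_lt_not_le _ _ Hlt (up_le T kappa x y Hk HU)).
  - intros y [Hy HnU]. split; auto. apply Rbar_not_lt_le. intro Hlt.
    apply HnU. apply up_lt; auto.
  - intros y Hy Hlt. apply up_lt; auto.
  - intros y HU. split. apply HU. apply up_le; auto.
Qed.
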